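(* Let $E,H$ be finite directed graphs and $\xi^0,\xi^1:H\to E$ an embedding pair. Then the associated self-similar groupoid action $(G_\xi,E)$ is contracting and regular.
   Context: Graph paths: finite paths $\mu_1\cdots\mu_n$ with $s(\mu_i)=r(\mu_{i+1})$; $E^k$ paths of length $k$; $vE^*$ paths with range $v$. Embedding pair: injective graph homomorphisms $\xi^0,\xi^1:H\to E$ with $\xi^0|_{H^0}=\xi^1|_{H^0}$ and $\xi^0(H^1)\cap\xi^1(H^1)=\emptyset$; $H^1_\xi=\xi^0(H^1)\cup\xi^1(H^1)$. On the group bundle $\mathbb{Z}\times E^0$ ($(m,v)(n,v)=(m+n,v)$, domain = codomain $=v$) define for $e\in vE^1$: if $e\notin H^1_\xi$, $(m,v)\cdot e=e$, $(m,v)|_e=(0,s(e))$; if $e=\xi^i(h)$, $h\in H^1$, writing $m+i=2n+j$ with $j\in\{0,1\}$, $n\in\mathbb{Z}$: $(m,v)\cdot e=\xi^j(h)$, $(m,v)|_e=(n,s(e))$; extend to paths by $g\cdot(e\nu)=(g\cdot e)(g|_e\cdot\nu)$, $g|_{e\nu}=(g|_e)|_\nu$. $G_\xi$ is the quotient of $\mathbb{Z}\times E^0$ by elements acting trivially on $E^*$; $(G_\xi,E)$ is a faithful self-similar groupoid action. Contracting: there is a finite $F\subseteq G_\xi$ such that for every $g$ there is $n\ge0$ with $g|_\mu\in F$ for all $\mu\in d(g)E^k$, $k\ge n$. Regular: for every $g$ there is $K\in\mathbb{N}$ such that $g\cdot\mu=\mu$ and $|\mu|\ge K$ imply $g|_\mu$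 is the unit at $s(\mu)$. *)

(* Defs.v *)
From mathcomp Require Import all_boot all_order all_algebra.
Set Implicit Arguments. Unset Strict Implicit. Unset Printing Implicit Defensive.
Import GRing.Theory Num.Theory.

(* A finite path mu_1 ... mu_n with range v (an element of vE^* ) is encoded
   as the pair (v, [:: mu_1; ...; mu_n]) with r(mu_1) = v and
   s(mu_i) = r(mu_(i+1)).  The empty path at v is (v, [::]). *)

Section Paths.
Variables (V Ed : finType) (r s : Ed -> V).

Fixpoint is_path (v : V) (p : seq Ed) : bool :=
  if p is e :: p' then (r e == v) && is_path (s e) p' else true.

Definition path_src (v : V) (p : seq Ed) : V := last v [seq s e | e <- p].

Definition graph_hom (VH EH : finType) (rH sH : EH -> VH)
    (fv : VH -> V) (fe : EH -> Ed) : Prop :=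
  forall h, r (fe h) = fv (rH h) /\ s (fe h) = fv (sH h).
End Paths.

Definition embedding_pair (VE EE VH EH : finType) (rE sE : EE -> VE)
    (rH sH : EH -> VH) (x0v x1v : VH -> VE) (x0e x1e : EH -> EE) : Prop :=
  [/\ graph_hom rE sE rH sH x0v x0e /\ graph_hom rE sE rH sH x1v x1e,
      injective x0v /\ injective x0e, injective x1v /\ injective x1e,
      (forall w, x0v w = x1v w) &
      (forall h h', x0e h <> x1e h')].

Local Open Scope ring_scope.

Section Action.
Variables (EE EH : finType) (x0e x1e : EH -> EE).

(* For the group bundle element (m, r(e)) acting on the edge e, returns
   (g . e, n) where g|_e = (n, s(e)). *)
Definition edge_act (m : int) (e : EE) : EE * int :=
  let res (h : EH) (i : int) :=
    let z := m + i in
    ((if (z %% 2)%Z == 1 then x1e h else x0e h), (z %/ 2)%Z) in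
  match [pick h | x0e h == e] with
  | Some h => res h 0
  | None =>
    match [pick h | x1e h == e] with
    | Some h => res h 1
    | None => (e, 0)
    end
  end.

(* Action on paths: returns (g . mu, k) where g|_mu = (k, s(mu)).
   g . (e nu) = (g . e)(g|_e . nu),  g|_(e nu) = (g|_e)|_nu,
   and on the empty path g . v = v, g|_v = g. *)
Fixpoint path_act (m : int) (p : seq EE) : seq EE * int :=
  match p with
  | [::] => ([::], m)
  | e :: p' =>
    let (e', n) := edge_act m e in
    let (q, k) := path_act n p' in (e' :: q, k)
  end.
End Action.

Section Groupoid.
Variables (VE EE EH : finType) (rE sE : EE -> VE) (x0e x1e : EH -> EE).

Definition acts_trivially (v : VE) (m : int) : Prop :=
  forall p, is_path rE sE v p -> (path_act x0e x1e m p).1 = p.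

(* Equality in the quotient G_xi: (m, v) and (m', v') represent the same
   element of G_xi iff v = v' and (m - m', v) acts trivially on E^*
   (quotient of Z x E^0 by the elements acting trivially). *)
Definition Gxi_eq (g g' : int * VE) : Prop :=
  g.2 = g'.2 /\ acts_trivially g.2 (g.1 - g'.1).

Definition contracting : Prop :=
  exists F : seq (int * VE),
    forall (m : int) (v : VE), exists n : nat,
      forall p, is_path rE sE v p -> (n <= size p)%N ->
        exists f, f \in F /\
          Gxi_eq ((path_act x0e x1e m p).2, path_src sE v p) f.

Definition regular : Prop :=
  forall (m : int) (v : VE), exists K : nat,
    forall p, is_path rE sE v p ->
      (path_act x0e x1e m p).1 = p -> (K <= size p)%N ->
      Gxi_eq ((path_act x0e x1e m p).2, path_src sE v p) (0, path_src sE v p).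
End Groupoid.

(* Main.v *)
Require Import Defs.
From mathcomp Require Import all_boot all_order all_algebra.
From mathcomp Require Import zify.
Import GRing.Theory Num.Theory.
Local Open Scope ring_scope.

Section Aux.
Variables (EE EH : finType) (x0e x1e : EH -> EE).

Lemma edge_act_cases (m : int) (e : EE) :
  (edge_act x0e x1e m e = (e, 0)) \/
  exists h (i : int), (i = 0 /\ x0e h = e \/ i = 1 /\ x1e h = e) /\
    edge_act x0e x1e m e =
      ((if ((m + i) %% 2)%Z == 1 then x1e h else x0e h), ((m + i) %/ 2)%Z).
Proof.
rewrite /edge_act; case: pickP => [h /eqP Hh|_].
  by right; exists h, 0; split; [left|].
case: pickP => [h /eqP Hh|_]; last by left.
by right; exists h, 1; split; [right|].
Qed.

Definition dd (m : int) : nat := (`|m|%N).-1.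

Lemma edge_act0 e : edge_act x0e x1e 0 e = (e, 0).
Proof.
case: (edge_act_cases 0 e) => [//|[h [i [[[-> <-]|[-> <-]] ->]]]] //.
Qed.

Lemma edge_act_dd m e : (dd (edge_act x0e x1e m e).2 <= (dd m).-1)%N.
Proof.
case: (edge_act_cases m e) => [->|[h [i [[[-> _]|[-> _]] ->]]]] /=;
  rewrite /dd; lia.
Qed.

Lemma path_act_cons m e p :
  path_act x0e x1e m (e :: p) =
  ((edge_act x0e x1e m e).1 :: (path_act x0e x1e (edge_act x0e x1e m e).2 p).1,
   (path_act x0e x1e (edge_act x0e x1e m e).2 p).2).
Proof.
simpl; case: (edge_act x0e x1e m e) => a b /=.
by case: (path_act x0e x1e b p).
Qed.

Lemma path_act0 p : path_act x0e x1e 0 p = (p, 0).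
Proof.
elim: p => [//|e p IH]; by rewrite path_act_cons edge_act0 /= IH.
Qed.

Lemma path_act_dd p m : (dd m <= size p)%N -> (`|(path_act x0e x1e m p).2| <= 1)%N.
Proof.
elim: p m => [|e p IH] m.
  rewrite /dd /=; lia.
rewrite path_act_cons /= => H; apply: IH.
have := edge_act_dd m e; lia.
Qed.

Hypothesis disj : forall h h', x0e h <> x1e h'.

Lemma edge_act_pm1 m e : (`|m| <= 1)%N -> (edge_act x0e x1e m e).1 = e ->
  (edge_act x0e x1e m e).2 = 0.
Proof.
move=> Hm.
case: (edge_act_cases m e) => [->//|[h [i [[[-> Hh]|[-> Hh]] ->]]]] /= Hf.
- move: Hf; rewrite -Hh; case: ifP => Hz Hf.
  + by exfalso; apply: (disj h h); rewrite Hf.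
  + lia.
- move: Hf; rewrite -Hh; case: ifP => Hz Hf.
  + lia.
  + by exfalso; apply: (disj h h); rewrite Hf.
Qed.

Lemma path_act_reg p m : (dd m < size p)%N -> (path_act x0e x1e m p).1 = p ->
  (path_act x0e x1e m p).2 = 0.
Proof.
elim: p m => [|e p IH] m //.
rewrite path_act_cons /= => Hs [He Hp].
case: (posnP (dd m)) => Hd.
  rewrite edge_act_pm1 ?path_act0 //.
  move: Hd; rewrite /dd; lia.
apply: IH => //.
have := edge_act_dd m e; lia.
Qed.
End Aux.

Theorem proposition4p1 (VE EE VH EH : finType) (rE sE : EE -> VE)
    (rH sH : EH -> VH) (x0v x1v : VH -> VE) (x0e x1e : EH -> EE) :
  embedding_pair rE sE rH sH x0v x1v x0e x1e ->
  contracting rE sE x0e x1e /\ regular rE sE x0e x1e.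
Proof.
case=> _ _ _ _ disj.
have refl : forall k v, Gxi_eq rE sE x0e x1e (k, v) (k, v).
  move=> k v; split=> //=; rewrite subrr => p _; by rewrite path_act0.
split.
  exists [seq (k, v) | k <- [:: -1; 0; 1], v <- enum VE].
  move=> m v; exists (dd m) => p _ Hn.
  exists ((path_act x0e x1e m p).2, path_src sE v p); split; last exact: refl.
  apply: allpairs_f; last by rewrite mem_enum.
  have := @path_act_dd _ _ x0e x1e _ _ Hn.
  move: ((path_act x0e x1e m p).2) => k Hk.
  have [->|[->|->]] : k = 0 \/ k = 1 \/ k = -1 by lia.
  1-3: by rewrite !inE ?eqxx ?orbT.
move=> m v; exists (dd m).+1 => p _ Hf Hn.
rewrite (@path_act_reg _ _ x0e x1e disj _ _ Hn Hf); exact: refl.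
Qed.
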